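(* Let $\mathcal{A}=(Q,\delta,I,F)$ be a complete Büchi automaton and let $p,q\in Q$ with $p\preceq_{\mathit{de}}q$. Let $L_\top=\{w\in\Sigma^*\mid p\overset{w}{\leadsto}_F q\}$ and $L_\bot=\{w\in\Sigma^*\mid p\overset{w}{\leadsto}q\}$. Then $\mathcal{L}(q)\supseteq(L_\bot^*L_\top)^\omega$.
   Context: A Büchi automaton is $\mathcal{A}=(Q,\delta,I,F)$ over a finite alphabet $\Sigma$ with $\delta:Q\times\Sigma\to2^Q$, complete if $\delta(q,a)\neq\emptyset$ always. A run from $q$ on $\alpha=\alpha_0\alpha_1\cdots$ is $\rho$ with $\rho_0=q$, $\rho_{i+1}\in\delta(\rho_i,\alpha_i)$; it is accepting if some state of $F$ occurs infinitely often. $\mathcal{L}(q)$ is the set of infinite words with an accepting run from $q$. For $w\in\Sigma^*$, $p\overset{w}{\leadsto}q$ means $q$ is reachable from $p$ by a path reading $w$, and $p\overset{w}{\leadsto}_F q$ means there is such a path that contains an accepting state. For $L\subseteq\Sigma^*$: $L^*$ is the set of finite concatenations of words of $L$, $L_1L_2=\{w_1w_2\mid w_i\in L_i\}$, and $L^\omega=\{w_1w_2\cdots\in\Sigma^\omega\mid w_i\in L\}$. Delayed simulation: in the game from $(p_0,r_0)$, in round $i$ Spoiler picks $p_i\xrightarrow{\alpha_i}p_{i+1}$ and Duplicator answers $r_i\xrightarrow{\alpha_i}r_{i+1}$; a Duplicator strategy is a map $\sigma$ with $\sigma(r,p\xrightarrow{a}p')\in\delta(r,a)$ (no lookahead). Duplicator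 wins if for all $i$, $p_i\in F$ implies $r_k\in F$ for some $k\ge i$. $p\preceq_{\mathit{de}}r$ iff Duplicator has a winning strategy from $(p,r)$. *)

(* Defs.v *)
From mathcomp Require Import all_boot.
Set Implicit Arguments. Unset Strict Implicit. Unset Printing Implicit Defensive.

Record buchi (Sigma Q : finType) := Buchi {
  delta : Q -> Sigma -> {set Q};
  init  : {set Q};
  acc   : {set Q} }.

Section Buchi.
Variables (Sigma Q : finType) (A : buchi Sigma Q).

Definition complete : Prop := forall (q : Q) (a : Sigma), delta A q a != set0.

Definition run (q : Q) (al : nat -> Sigma) (rho : nat -> Q) : Prop :=
  rho 0 = q /\ forall i, rho i.+1 \in delta A (rho i) (al i).

Definition accepting (rho : nat -> Q) : Prop :=
  exists2 f, f \in acc A & forall n, exists2 m, n <= m & rho m = f.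

Definition lang (q : Q) (al : nat -> Sigma) : Prop :=
  exists rho, run q al rho /\ accepting rho.

(* reach p w q b : there is a path from p to q reading w; b records whether
   it visits an accepting state (endpoints included). *)
Inductive reach : Q -> seq Sigma -> Q -> bool -> Prop :=
| reach_nil q : reach q [::] q (q \in acc A)
| reach_cons p a p' w q b :
    p' \in delta A p a -> reach p' w q b -> reach p (a :: w) q ((p \in acc A) || b).

Definition reaches (p : Q) (w : seq Sigma) (q : Q) : Prop := exists b, reach p w q b.
Definition reachesF (p : Q) (w : seq Sigma) (q : Q) : Prop := reach p w q true.

(* Duplicator strategies (no lookahead): sigma r p a p' answers Spoiler's
   transition p -a-> p' from Duplicator's current state r. *)
Definition strategy (s : Q -> Q -> Sigma -> Q -> Q) : Prop :=
  forall r p a p', p' \in delta A p a -> s r p a p' \in delta A r a.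

Fixpoint dup_play (s : Q -> Q -> Sigma -> Q -> Q) (r0 : Q)
    (ps : nat -> Q) (al : nat -> Sigma) (n : nat) : Q :=
  match n with
  | 0 => r0
  | n'.+1 => s (dup_play s r0 ps al n') (ps n') (al n') (ps n'.+1)
  end.

Definition delayed_sim (p r : Q) : Prop :=
  exists s, strategy s /\
    forall (al : nat -> Sigma) (ps : nat -> Q), run p al ps ->
      forall i, ps i \in acc A ->
        exists2 k, i <= k & dup_play s r ps al k \in acc A.

End Buchi.

Definition star (Sigma : eqType) (L : seq Sigma -> Prop) (w : seq Sigma) : Prop :=
  exists ws : seq (seq Sigma), (forall u, u \in ws -> L u) /\ flatten ws = w.

Definition lconcat (Sigma : Type) (L1 L2 : seq Sigma -> Prop) (w : seq Sigma) : Prop :=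
  exists w1 w2, L1 w1 /\ L2 w2 /\ w = w1 ++ w2.

(* L^omega: infinite words w = w_0 w_1 w_2 ... with each w_i in L *)
Definition omega (Sigma : Type) (L : seq Sigma -> Prop) (al : nat -> Sigma) : Prop :=
  exists ws : nat -> seq Sigma,
    (forall i, L (ws i)) /\
    (forall n, flatten (mkseq ws n) = mkseq al (size (flatten (mkseq ws n)))) /\
    (forall m, exists n, m <= size (flatten (mkseq ws n))).

(* Main.v *)
Require Import Defs.
From mathcomp Require Import all_boot zify.
From Stdlib Require Import Classical ClassicalEpsilon.
Set Implicit Arguments. Unset Strict Implicit. Unset Printing Implicit Defensive.

Lemma inf_acc (Q : finType) (F : {set Q}) (rho : nat -> Q) :
  (forall N, exists2 m, N <= m & rho m \in F) ->
  exists2 f, f \in F & forall n, exists2 m, n <= m & rho m = f.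
Proof.
move=> Hinf; apply: NNPP => H.
have: forall l : seq Q, exists N, forall f, f \in l -> forall m, N <= m -> ~ (rho m = f /\ f \in F).
  elim=> [|f l [N HN]]; first by exists 0.
  have [N' HN'] : exists N', forall m, N' <= m -> ~ (rho m = f /\ f \in F).
    case hf: (f \in F); last by exists 0 => m _ [_ //].
    have: ~ (forall n, exists2 m, n <= m & rho m = f) by move=> hh; apply: H; exists f.
    move/not_all_ex_not=> [n hn]; exists n => m hm [hr _]; apply: hn; by exists m.
  exists (maxn N N') => g; rewrite inE => /orP [/eqP ->|hg] m hm.
    apply: HN'; lia.
  apply: HN => //; lia.
move=> /(_ (enum Q)) [N HN].
have [m hm hF] := Hinf N.
by apply: (HN (rho m) _ m hm); rewrite ?mem_enum.
Qed.

Definition Dd (rst : nat -> bool) : nat -> nat :=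
  fix D n := if n is n'.+1 then D n' + rst n else 1.

Fixpoint Uf (Sigma Q : Type) (s : Q -> Q -> Sigma -> Q -> Q) (Sn : nat -> Q) (d : nat)
  (a : Sigma) (top : Q) (k : nat) : Q :=
  if k is k'.+1 then s (Sn (d - k)) (Sn (d - k')) a (Uf s Sn d a top k') else top.

Fixpoint Sf (Sigma Q : Type) (s : Q -> Q -> Sigma -> Q -> Q) (al : nat -> Sigma)
  (x e : nat -> Q) (rst : nat -> bool) (p q : Q) (n : nat) : nat -> Q :=
  if n is n'.+1 then
    (fun l => if l <= Dd rst n' then Uf s (Sf s al x e rst p q n') (Dd rst n') (al n') (e n) (Dd rst n' - l)
              else x n)
  else (fun l => if l == 0 then q else p).

Lemma stage2 (Sigma Q : finType) (A : buchi Sigma Q) (p q : Q) s (al : nat -> Sigma)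
  (x e : nat -> Q) (rst : nat -> bool) :
  strategy A s ->
  (forall al' ps, run A p al' ps -> forall i, ps i \in acc A ->
      exists2 k, i <= k & dup_play s q ps al' k \in acc A) ->
  x 0 = p -> e 0 = q ->
  (forall n, e n.+1 \in delta A (x n) (al n)) ->
  (forall n, if rst n.+1 then e n.+1 = q /\ x n.+1 = p else x n.+1 = e n.+1) ->
  (forall N, exists2 n, N <= n & (x n \in acc A) || (e n \in acc A)) ->
  lang A q al.
Proof.
move=> Hstr Hsim Hx0 He0 Hdel Hrst Hvis.
pose D := Dd rst. pose S := Sf s al x e rst p q.
have DS : forall n, D n.+1 = D n + rst n.+1 by [].
have Dmono : forall n m, n <= m -> D n <= D m.
  move=> n; elim=> [|m IH]; first by rewrite leqn0 => /eqP ->.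
  rewrite leq_eqVlt => /orP [/eqP ->//|]; rewrite ltnS => /IH h.
  rewrite DS; lia.
have D1 : forall n, 1 <= D n by move=> n; apply: (Dmono 0).
have Srec : forall n l, l < D n -> S n.+1 l = s (S n l) (S n l.+1) (al n) (S n.+1 l.+1).
  move=> n l hl; rewrite /S /= -/(D n) (ltnW hl) hl.
  rewrite -(subnSK hl) /=.
  have -> : D n - (D n - l.+1).+1 = l by lia.
  have -> : D n - (D n - l.+1) = l.+1 by lia.
  by [].
have Stop : forall n, S n.+1 (D n) = e n.+1.
  by move=> n; rewrite /S /= -/(D n) leqnn subnn.
have Sabove : forall n l, D n < l -> S n.+1 l = x n.+1.
  by move=> n l hl; rewrite /S /= -/(D n) leqNgt hl.
have Sx : forall n, S n (D n) = x n.
  case=> [|n]; first by rewrite /S /= Hx0.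
  move: (Hrst n); rewrite DS; case: (rst n.+1) => [[_ hp]|->].
    by rewrite Sabove //; lia.
  by have -> : D n + false = D n by lia.
have Se : forall n, exists2 l, l <= D n & S n l = e n.
  case=> [|n]; first by exists 0 => //; rewrite He0.
  by exists (D n); [apply: Dmono|rewrite Stop].
have Strans : forall n l, l <= D n -> S n.+1 l \in delta A (S n l) (al n).
  move=> n l hl.
  have H : forall k, k <= D n -> S n.+1 (D n - k) \in delta A (S n (D n - k)) (al n).
    elim=> [|k IH] hk; first by rewrite subn0 Stop Sx; apply: Hdel.
    have hlt : D n - k.+1 < D n by lia.
    rewrite Srec //.
    have -> : (D n - k.+1).+1 = D n - k by lia.
    by apply: Hstr; apply: IH; lia.
  have := H (D n - l) (leq_subr _ _).
  by rewrite subKn.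
have Sstart : forall n l, l < D n -> exists n0, [/\ n0 <= n, l < D n0, S n0 l = q & S n0 l.+1 = p].
  elim=> [|n IH] l hl.
    exists 0; split => //; have -> : l = 0 by move: hl; rewrite /D /=; lia.
    by [].
  case: (ltnP l (D n)) => h.
    by have [n0 [h1 h2 h3 h4]] := IH l h; exists n0; split => //; lia.
  move: hl (Hrst n); rewrite DS; case hr: (rst n.+1) => /= hl; last by lia.
  move=> [hq hp]; have el : l = D n by lia.
  exists n.+1; split => //; first by rewrite DS hr; lia.
    by rewrite el Stop.
  by rewrite Sabove // el.
have Sdup : forall n0 l, l < D n0 -> forall m,
    dup_play s (S n0 l) (fun k => S (n0 + k) l.+1) (fun k => al (n0 + k)) m = S (n0 + m) l.
  move=> n0 l hl; elim=> [|m IH]; first by rewrite addn0.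
  rewrite /= IH addnS [RHS]Srec //.
  have := Dmono n0 (n0+m) (leq_addr _ _); lia.
have Hprop : forall l n, l <= D n -> S n l \in acc A -> exists2 k, n <= k & S k 0 \in acc A.
  elim=> [|l IH] n hl hacc; first by exists n.
  have [n0 [h1 h2 h3 h4]] := Sstart n l hl.
  have hrun : run A p (fun k => al (n0 + k)) (fun k => S (n0 + k) l.+1).
    split; first by rewrite addn0.
    move=> i; rewrite addnS; apply: Strans.
    by apply: (leq_trans h2); apply: Dmono; lia.
  have hacc' : S (n0 + (n - n0)) l.+1 \in acc A by rewrite subnKC.
  have [k hk hk2] := Hsim _ _ hrun (n - n0) hacc'.
  rewrite -h3 Sdup // in hk2.
  have [k' hk' hk'2] := IH (n0 + k) (ltnW (leq_trans h2 (Dmono _ _ (leq_addr _ _)))) hk2.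
  by exists k' => //; lia.
exists (fun m => S m 0); split.
  split => // n; by apply: Strans.
apply: inf_acc => N.
have [n hn /orP [hx|he]] := Hvis N.
  have hx' : S n (D n) \in acc A by rewrite Sx.
  have [k hk hk2] := Hprop (D n) n (leqnn _) hx'.
  by exists k => //; lia.
have [l hl hl2] := Se n.
have he' : S n l \in acc A by rewrite hl2.
have [k hk hk2] := Hprop l n hl he'.
by exists k => //; lia.
Qed.
Definition bdata (Sigma Q : finType) (A : buchi Sigma Q) (p q : Q) (a0 : Sigma)
  (w : seq Sigma) (xs es : nat -> Q) (rs : nat -> bool) : Prop :=
  [/\ xs 0 = p, es (size w) = q,
   forall t, t < size w -> es t.+1 \in delta A (xs t) (nth a0 w t)
 & forall t, 0 < t < size w -> if rs t then es t = q /\ xs t = p else xs t = es t].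

Definition bvisit (Sigma Q : finType) (A : buchi Sigma Q) (w : seq Sigma) (xs es : nat -> Q) :=
  exists t, (t < size w /\ xs t \in acc A) \/ (0 < t <= size w /\ es t \in acc A).

Lemma piece (Sigma Q : finType) (A : buchi Sigma Q) (a0 : Sigma) p' w q' b :
  reach A p' w q' b -> exists st : nat -> Q,
  [/\ st 0 = p', st (size w) = q',
      forall t, t < size w -> st t.+1 \in delta A (st t) (nth a0 w t)
    & b -> exists2 t, t <= size w & st t \in acc A].
Proof.
elim=> {p' w q' b} [r | r a r' w r2 b hd _ [st [h0 h1 h2 h3]]].
  by exists (fun _ => r); split => // ->; exists 0.
exists (fun t => if t is t'.+1 then st t' else r); split => //=.
  by case=> [_|t ht] /=; [rewrite h0 | apply: h2].
move/orP=> [hr|hb]; first by exists 0.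
by have [t ht ht2] := h3 hb; exists t.+1.
Qed.

Lemma bconcat (Sigma Q : finType) (A : buchi Sigma Q) (p q : Q) (a0 : Sigma) w1 w2 xs1 es1 rs1 xs2 es2 rs2 :
  bdata A p q a0 w1 xs1 es1 rs1 -> bdata A p q a0 w2 xs2 es2 rs2 ->
  bdata A p q a0 (w1 ++ w2)
    (fun t => if t < size w1 then xs1 t else xs2 (t - size w1))
    (fun t => if t <= size w1 then es1 t else es2 (t - size w1))
    (fun t => if t < size w1 then rs1 t else if t == size w1 then true else rs2 (t - size w1)).
Proof.
move=> [a1 b1 c1 d1] [a2 b2 c2 d2]; split.
- by case: ifP => _ //; rewrite sub0n.
- rewrite size_cat; case: ifP => h.
    by have -> : size w1 + size w2 = size w1 by lia.
  by rewrite addKn.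
- move=> t /=; rewrite size_cat nth_cat => ht.
  have [h|h] := ltnP t (size w1); first by apply: c1.
  rewrite subSn //; apply: c2; lia.
- move=> t /andP [ht0 ht] /=; rewrite size_cat in ht.
  have [h|h] := ltnP t (size w1).
    by rewrite (ltnW h); apply: d1; rewrite ht0 h.
  case: (eqVneq t (size w1)) => [->|hne].
    by rewrite leqnn subnn; split.
  have h' : size w1 < t by lia.
  rewrite leqNgt h' /=; apply: d2; apply/andP; split; lia.
Qed.

Lemma bvconcat (Sigma Q : finType) (A : buchi Sigma Q) w1 w2 xs1 es1 xs2 es2 :
  bvisit A w2 xs2 es2 ->
  bvisit A (w1 ++ w2)
    (fun t => if t < size w1 then xs1 t else xs2 (t - size w1))
    (fun t => if t <= size w1 then es1 t else es2 (t - size w1)).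
Proof.
move=> [t [[ht hx]|[ht he]]]; exists (t + size w1).
  left; rewrite /= size_cat.
  have -> : (t + size w1 < size w1) = false by apply/negbTE; rewrite -leqNgt leq_addl.
  rewrite addnK; split => //; lia.
right; rewrite /= size_cat.
have -> : (t + size w1 <= size w1) = false by apply/negbTE; rewrite -ltnNge; lia.
rewrite addnK; split => //; lia.
Qed.

Lemma block (Sigma Q : finType) (A : buchi Sigma Q) (p q : Q) (a0 : Sigma) w :
  lconcat (star (fun w => reaches A p w q)) (fun w => reachesF A p w q) w ->
  exists xs es rs, bdata A p q a0 w xs es rs /\ (w != [::] -> bvisit A w xs es).
Proof.
move=> [w1 [w2 [[us [hus <-]] [hv ->]]]].
have [st [h0 h1 h2 h3]] := piece a0 hv.
have bd2 : bdata A p q a0 w2 st st (fun _ => false) by split.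
have gen : forall us, (forall u, u \in us -> reaches A p u q) ->
    exists xs es rs, bdata A p q a0 (flatten us ++ w2) xs es rs /\
     (w2 != [::] -> bvisit A (flatten us ++ w2) xs es).
  elim=> [|u us' IH] hus' /=.
    exists st, st, (fun _ => false); split => // hne.
    have [t ht hacc] := h3 erefl.
    have hs : 0 < size w2 by rewrite lt0n size_eq0.
    exists t; case: (ltnP t (size w2)) => h; [left|right]; split => //; lia.
  have [xs [es [rs [bd vis]]]] : exists xs es rs, bdata A p q a0 (flatten us' ++ w2) xs es rs /\
     (w2 != [::] -> bvisit A (flatten us' ++ w2) xs es).
    by apply: IH => u' h; apply: hus'; rewrite inE h orbT.
  have [b hb] := hus' u (mem_head _ _).
  have [st' [g0 g1 g2 _]] := piece a0 hb.
  have bdu : bdata A p q a0 u st' st' (fun _ => false) by split.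
  rewrite -catA; do 3 eexists; split; first exact: bconcat bdu bd.
  by move=> /vis; apply: bvconcat.
have [xs [es [rs [bd vis]]]] := gen us hus.
exists xs, es, rs; split => // hne.
case: (eqVneq w2 [::]) => [e2|]; last by move/vis.
move: e2 h3 h0 bd hne => -> /(_ erefl) [t] /=; rewrite leqn0 => /eqP -> hacc h0 [a _ _ _] hne.
exists 0; left; split; last by rewrite a -h0.
by rewrite lt0n size_eq0.
Qed.

Theorem lemma10 (Sigma Q : finType) (A : buchi Sigma Q) (p q : Q) :
  complete A -> delayed_sim A p q ->
  forall al : nat -> Sigma,
    omega (lconcat (star (fun w => reaches A p w q)) (fun w => reachesF A p w q)) al ->
    lang A q al.
Proof.
move=> _ [s [Hstr Hsim]] al [ws [Hws [Hpre Hunb]]].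
pose a0 := al 0.
pose c i := size (flatten (mkseq ws i)).
have cS : forall i, c i.+1 = c i + size (ws i).
  by move=> i; rewrite /c mkseqS flatten_rcons size_cat.
have cmono : forall i j, i <= j -> c i <= c j.
  move=> i; elim=> [|j IH]; first by rewrite leqn0 => /eqP ->.
  rewrite leq_eqVlt => /orP [/eqP ->//|]; rewrite ltnS => /IH h.
  rewrite cS; lia.
have cal : forall i t, t < size (ws i) -> al (c i + t) = nth a0 (ws i) t.
  move=> i t ht.
  have E : nth a0 (flatten (mkseq ws i.+1)) (c i + t) = nth a0 (mkseq al (c i.+1)) (c i + t).
    by rewrite {1}(Hpre i.+1).
  rewrite nth_mkseq in E; last by rewrite cS; lia.
  rewrite -E mkseqS flatten_rcons nth_cat -/(c i).
  have -> : (c i + t < c i) = false by apply/negbTE; rewrite -leqNgt leq_addr.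
  by rewrite addKn.
have blkex : forall n, exists i, c i <= n < c i.+1.
  move=> n; have [N hN] := Hunb n.+1.
  elim: N hN => [|N IH] hN; first by move: hN; rewrite /c /=.
  case: (ltnP n (c N)) => h; first exact: IH.
  by exists N; rewrite h.
have cuniq : forall n i j, c i <= n < c i.+1 -> c j <= n < c j.+1 -> i = j.
  move=> n i j /andP [h1 h2] /andP [h3 h4].
  case: (ltngtP i j) => h //.
    have := cmono _ _ h; lia.
  have := cmono _ _ h; lia.
have [blk Hblk] : {f : nat -> nat | forall n, c (f n) <= n < c (f n).+1}.
  exists (fun n => proj1_sig (constructive_indefinite_description _ (blkex n))).
  by move=> n; exact: (proj2_sig (constructive_indefinite_description _ (blkex n))).
have Hbd : forall i, exists tr : (nat -> Q) * (nat -> Q) * (nat -> bool),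
    bdata A p q a0 (ws i) tr.1.1 tr.1.2 tr.2 /\ (ws i != [::] -> bvisit A (ws i) tr.1.1 tr.1.2).
  move=> i; have [xs [es [rs H]]] := block a0 (Hws i).
  by exists (xs, es, rs).
have [BD HBD] : {f : nat -> (nat -> Q) * (nat -> Q) * (nat -> bool) | forall i,
    bdata A p q a0 (ws i) (f i).1.1 (f i).1.2 (f i).2 /\ (ws i != [::] -> bvisit A (ws i) (f i).1.1 (f i).1.2)}.
  exists (fun i => proj1_sig (constructive_indefinite_description _ (Hbd i))).
  by move=> i; exact: (proj2_sig (constructive_indefinite_description _ (Hbd i))).
pose off n := n - c (blk n).
pose x n := (BD (blk n)).1.1 (off n).
pose e n := if n is n'.+1 then (BD (blk n')).1.2 (off n').+1 else q.
pose rst n := if n is n'.+1 then ((off n').+1 == size (ws (blk n'))) || (BD (blk n')).2 (off n').+1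
              else true.
have blkat : forall i t, t < size (ws i) -> blk (c i + t) = i /\ off (c i + t) = t.
  move=> i t ht.
  have e1 : blk (c i + t) = i.
    apply: (cuniq (c i + t)); first exact: Hblk.
    by rewrite cS; apply/andP; split; lia.
  by split => //; rewrite /off e1 addKn.
have Hdecomp : forall n, n = c (blk n) + off n /\ off n < size (ws (blk n)).
  move=> n; have /andP [h1 h2] := Hblk n; rewrite cS in h2.
  by rewrite /off; split; lia.
apply: (stage2 (p:=p) Hstr Hsim (x:=x) (e:=e) (rst:=rst)).
- rewrite /x /off.
  have /andP [h1 _] := Hblk 0.
  have -> : 0 - c (blk 0) = 0 by lia.
  by have [[-> _ _ _] _] := HBD (blk 0).
- by [].
- move=> n; rewrite /e /x.
  have [hn ht] := Hdecomp n.
  have [[_ _ Ht _] _] := HBD (blk n).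
  have -> : al n = nth a0 (ws (blk n)) (off n) by rewrite {1}hn cal.
  exact: Ht.
- move=> n; rewrite /rst /e /x.
  have [hn ht] := Hdecomp n.
  have [[_ Hend _ Hr] _] := HBD (blk n).
  case: (eqVneq (off n).+1 (size (ws (blk n)))) => [heq|hne] /=.
    split; first by rewrite heq.
    have hc : n.+1 = c (blk n).+1 by rewrite cS; lia.
    have /andP [g1 g2] := Hblk n.+1.
    have hj : (blk n).+1 <= blk n.+1.
      rewrite leqNgt; apply/negP => hlt.
      have := cmono (blk n.+1).+1 (blk n).+1 hlt; lia.
    have := cmono _ _ hj => hc2.
    have -> : off n.+1 = 0 by rewrite /off; lia.
    by have [[-> _ _ _] _] := HBD (blk n.+1).
  have hlt : (off n).+1 < size (ws (blk n)) by rewrite ltn_neqAle hne ht.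
  have [b1 b2] := blkat (blk n) (off n).+1 hlt.
  have hn1 : n.+1 = c (blk n) + (off n).+1 by rewrite addnS -hn.
  rewrite hn1 b1 b2.
  by apply: Hr; rewrite hlt.
- move=> N.
  have [M hM] := Hunb N; rewrite -/(c M) in hM.
  set i := blk (c M).
  have /andP [h1 h2] := Hblk (c M); rewrite -/i in h1 h2.
  have hMi : M <= i.
    rewrite leqNgt; apply/negP => hlt.
    have := cmono i.+1 M hlt; lia.
  have hci : c i = c M by have := cmono _ _ hMi; lia.
  have hne : ws i != [::].
    by rewrite -size_eq0; move: h2; rewrite cS; lia.
  have [_ Hvis] := HBD i.
  have [t [[ht hx]|[/andP [ht0 ht] he]]] := Hvis hne.
    have [b1 b2] := blkat i t ht.
    exists (c i + t); first lia.
    by rewrite /x b1 b2 hx.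
  case: t ht0 ht he => // t _ ht he.
  have [b1 b2] := blkat i t ht.
  exists (c i + t).+1; first lia.
  by rewrite /e b1 b2 he orbT.
Qed.
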